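(* Let $x\in J$ and let $\mathcal I=\{I_i\}_{i\in F}$ and $\mathcal L=\{L_j\}_{j\in G}$ be $x$-norming partitions. Then there exists an $x$-norming partition $\mathcal N=\{N_p\}_{p\in H}$ such that (1) $\mathcal N\subset\mathcal I\cup\mathcal L$; (2) for every $i\in F$ there is a subinterval $H_i$ of $H$ with $I_i\cap\mathrm{supp}(x)=\bigcup_{p\in H_i}(N_p\cap\mathrm{supp}(x))$, and for every $j\in G$ there is a subinterval $H'_j$ of $H$ with $L_j\cap\mathrm{supp}(x)=\bigcup_{p\in H'_j}(N_p\cap\mathrm{supp}(x))$.
   Context: For a real sequence $x=(x(n))_{n\in\mathbb N}$ let $\|x\|_J=\sup\bigl(\sum_{i=1}^n|\sum_{k\in I_i}x(k)|^2\bigr)^{1/2}$ over all $n$ and all families of pairwise disjoint intervals $I_1,\dots,I_n$ of $\mathbb N$ (intervals: nonempty sets of consecutive positive integers, possibly infinite). $J=\{x:\|x\|_J<\infty\}$; for $x\in J$ and any interval $I$ the series $\sum_{k\in I}x(k)$ converges. $\mathrm{supp}(x)=\{n:x(n)\ne0\}$. A family of intervals $\mathcal I=\{I_i\}_{i\in F}$: $F=\{1,\dots,k\}$ or $F=\mathbb N$, each $I_i$ an interval, $\max I_i<\min I_{i+1}$ whenever $i+1\in F$; $\|x\|_{\mathcal I}=(\sum_{i\in F}|\sum_{k\in I_i}x(k)|^2)^{1/2}$; it is $x$-norming if $\|x\|_{\mathcal I}=\|x\|_J$. For nonempty $L\subset\mathbb N$, $\sup L=\max L$ if finite and $\infty$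 otherwise. An $x$-norming partition is an $x$-norming family with $\{\min I_i,\max I_i\}\subset\mathrm{supp}(x)$ for all $i<\sup F$, and, if $F$ is finite, $\min I_i\in\mathrm{supp}(x)$ and $\sup I_i=\sup\mathrm{supp}(x)$ for $i=\sup F$. *)

(* Defs.v *)
From Stdlib Require Import Reals Lia List.
From Coquelicot Require Import Coquelicot.
Open Scope R_scope.

(* Sequences are indexed by nat (index 0 plays the role of the paper's 1). *)
Definition supp (x : nat -> R) (n : nat) : Prop := x n <> 0.

(* Intervals of nat: nonempty sets of consecutive naturals.
   IFin a d = {a, ..., a+d};  IInf a = {a, a+1, ...}. *)
Inductive interval : Type :=
| IFin : nat -> nat -> interval
| IInf : nat -> interval.

Definition in_int (I : interval) (n : nat) : Prop :=
  match I with
  | IFin a d => (a <= n <= a + d)%nat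
  | IInf a => (a <= n)%nat
  end.

Definition min_int (I : interval) : nat :=
  match I with IFin a _ => a | IInf a => a end.

(* max I if finite, None (= infinity) otherwise: this is sup I *)
Definition max_int (I : interval) : option nat :=
  match I with IFin a d => Some (a + d)%nat | IInf _ => None end.

Definition isum (x : nat -> R) (I : interval) : R :=
  match I with
  | IFin a d => sum_f_R0 (fun k => x (a + k)%nat) d
  | IInf a => Series (fun k => x (a + k)%nat)
  end.

Definition pairwise_disjoint (l : list interval) : Prop :=
  forall i j : nat, (i < length l)%nat -> (j < length l)%nat -> i <> j ->
    forall n, ~ (in_int (nth i l (IInf 0)) n /\ in_int (nth j l (IInf 0)) n).

Definition sumsq_list (x : nat -> R) (l : list interval) : R :=
  fold_right (fun I s => (isum x I) ^ 2 + s) 0 l.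

Definition normJ (x : nat -> R) : Rbar :=
  Lub_Rbar (fun r => exists l : list interval,
                l <> nil /\ pairwise_disjoint l /\ r = sqrt (sumsq_list x l)).

Definition in_J (x : nat -> R) : Prop := is_finite (normJ x).

(* A ifamily of intervals {I_i}_{i in F}: F = {0..k-1} (fsize = Some k)
   or F = nat (fsize = None). *)
Record ifamily : Type := mkIFamily { fsize : option nat; fint : nat -> interval }.

Definition inF (f : ifamily) (i : nat) : Prop :=
  match fsize f with Some k => (i < k)%nat | None => True end.

Definition is_family (f : ifamily) : Prop :=
  forall i, inF f (S i) ->
    exists b, max_int (fint f i) = Some b /\ (b < min_int (fint f (S i)))%nat.

Fixpoint psumsq (x : nat -> R) (g : nat -> interval) (n : nat) : R :=
  match n with
  | O => 0
  | S m => psumsq x g m + (isum x (g m)) ^ 2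
  end.

Definition norm_fam (x : nat -> R) (f : ifamily) : Rbar :=
  match fsize f with
  | Some k => Finite (sqrt (psumsq x (fint f) k))
  | None => Lim_seq (fun n => sqrt (psumsq x (fint f) n))
  end.

Definition x_norming (x : nat -> R) (f : ifamily) : Prop :=
  is_family f /\ norm_fam x f = normJ x.

(* sup I = sup supp(x)  (sup of an infinite set is infinity) *)
Definition sup_eq_supp (x : nat -> R) (I : interval) : Prop :=
  match max_int I with
  | Some m => supp x m /\ (forall n, (m < n)%nat -> ~ supp x n)
  | None => forall N, exists n, (N <= n)%nat /\ supp x n
  end.

Definition x_norming_partition (x : nat -> R) (f : ifamily) : Prop :=
  x_norming x f /\
  (forall i, inF f i -> inF f (S i) ->
     supp x (min_int (fint f i)) /\
     exists b, max_int (fint f i) = Some b /\ supp x b) /\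
  (forall i, fsize f = Some (S i) ->
     supp x (min_int (fint f i)) /\ sup_eq_supp x (fint f i)).

Definition same_interval (I K : interval) : Prop :=
  forall n, in_int I n <-> in_int K n.

Definition index_subinterval (f : ifamily) (K : interval) : Prop :=
  forall p, in_int K p -> inF f p.

Definition covers_supp (x : nat -> R) (I : interval) (N : ifamily) (K : interval) : Prop :=
  forall n, (in_int I n /\ supp x n) <->
            (exists p, in_int K p /\ in_int (fint N p) n /\ supp x n).

(* Main.v *)
Require Import Defs.
From Stdlib Require Import Reals Lra Lia List Classical ClassicalEpsilon.
From Coquelicot Require Import Coquelicot.
Import Defs.
Open Scope R_scope.

Section Basics.
Variable x : nat -> R.

Lemma in_int_min (I : interval) : in_int I (min_int I).
Proof. destruct I; simpl; lia. Qed.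

Lemma in_int_ge (I : interval) n : in_int I n -> (min_int I <= n)%nat.
Proof. destruct I; simpl; lia. Qed.

Lemma in_int_le_max (I : interval) b n : max_int I = Some b -> in_int I n -> (n <= b)%nat.
Proof. destruct I; simpl; intros H; inversion H; lia. Qed.

Lemma in_int_max (I : interval) b : max_int I = Some b -> in_int I b.
Proof. destruct I; simpl; intros H; inversion H; lia. Qed.

Lemma in_int_conv (I : interval) m n k : in_int I m -> in_int I n -> (m <= k <= n)%nat -> in_int I k.
Proof. destruct I; simpl; lia. Qed.

Lemma sumsq_app l1 l2 : sumsq_list x (l1 ++ l2) = sumsq_list x l1 + sumsq_list x l2.
Proof. induction l1; simpl. lra. rewrite IHl1. lra. Qed.

Lemma sumsq_nonneg l : 0 <= sumsq_list x l.
Proof. induction l; simpl. lra. nra. Qed.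

Lemma psum_S g n : psumsq x g (S n) = psumsq x g n + (isum x (g n))^2.
Proof. reflexivity. Qed.

Lemma psum_nonneg g n : 0 <= psumsq x g n.
Proof. induction n; simpl. lra. nra. Qed.

Lemma psum_mono g m n : (m <= n)%nat -> psumsq x g m <= psumsq x g n.
Proof. induction 1. lra. simpl. nra. Qed.

Lemma sumsq_map_seq g a k :
  sumsq_list x (map g (seq a k)) = psumsq x g (a + k) - psumsq x g a.
Proof.
  revert a; induction k; intros a; simpl.
  - rewrite Nat.add_0_r. lra.
  - rewrite IHk. replace (a + S k)%nat with (S a + k)%nat by lia. simpl. lra.
Qed.

Definition lt_int (I J : interval) := forall n m, in_int I n -> in_int J m -> (n < m)%nat.
Definition srt (l : list interval) := ForallOrdPairs lt_int l.

Lemma lt_int_trans (A B C : interval) : lt_int A B -> lt_int B C -> lt_int A C.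
Proof.
  intros H1 H2 n m Hn Hm. pose proof (H1 n _ Hn (in_int_min B)).
  pose proof (H2 _ m (in_int_min B) Hm). lia.
Qed.

Lemma FOP_nth (l : list interval) i j d :
  srt l -> (i < j)%nat -> (j < length l)%nat -> lt_int (nth i l d) (nth j l d).
Proof.
  intros H; revert i j; induction H; intros i j Hij Hj; simpl in *. lia.
  destruct i, j; try lia.
  - rewrite Forall_forall in H. apply H. apply nth_In. lia.
  - apply IHForallOrdPairs; lia.
Qed.

Lemma srt_pd l : srt l -> pairwise_disjoint l.
Proof.
  intros H i j Hi Hj Hij n [H1 H2].
  destruct (Nat.lt_gt_cases i j) as [Hlt _]. destruct (Nat.lt_total i j) as [Ha|[Ha|Ha]]; try lia.
  - pose proof (FOP_nth _ _ _ (IInf 0) H Ha Hj n n H1 H2); lia.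
  - pose proof (FOP_nth _ _ _ (IInf 0) H Ha Hi n n H2 H1); lia.
Qed.

Lemma srt_app l1 l2 : srt l1 -> srt l2 ->
  (forall a b, In a l1 -> In b l2 -> lt_int a b) -> srt (l1 ++ l2).
Proof.
  intros H1 H2 H3; induction H1; simpl. auto.
  constructor.
  - apply Forall_app; split; auto. apply Forall_forall; intros; apply H3; simpl; auto.
  - apply IHForallOrdPairs; intros; apply H3; simpl; auto.
Qed.

Lemma srt_cons a l : srt l -> (forall b, In b l -> lt_int a b) -> srt (a :: l).
Proof. intros; constructor; auto. apply Forall_forall; auto. Qed.

Lemma srt_nil : srt nil.
Proof. constructor. Qed.

Definition Reach (f : ifamily) n := forall m, (m < n)%nat -> inF f m.

Lemma inF_down f m n : inF f n -> (m <= n)%nat -> inF f m.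
Proof. unfold inF; destruct (fsize f); auto; lia. Qed.

Lemma fam_next_lt f i : is_family f -> inF f (S i) -> lt_int (fint f i) (fint f (S i)).
Proof.
  intros Hf Hi n m Hn Hm. destruct (Hf i Hi) as [b [Hb Hlt]].
  pose proof (in_int_le_max _ _ _ Hb Hn). pose proof (in_int_ge _ _ Hm). lia.
Qed.

Lemma fam_lt f i j : is_family f -> inF f j -> (i < j)%nat -> lt_int (fint f i) (fint f j).
Proof.
  intros Hf Hj Hij. induction Hij.
  - apply fam_next_lt; auto.
  - apply lt_int_trans with (fint f m). apply IHHij. apply inF_down with (S m); auto.
    apply fam_next_lt; auto.
Qed.

Lemma fam_min_lt f i j : is_family f -> inF f j -> (i < j)%nat ->
  (min_int (fint f i) < min_int (fint f j))%nat.
Proof. intros. apply (fam_lt f i j); auto; apply in_int_min. Qed.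

Lemma fam_min_inj f i j : is_family f -> inF f i -> inF f j ->
  min_int (fint f i) = min_int (fint f j) -> i = j.
Proof.
  intros Hf Hi Hj E. destruct (Nat.lt_total i j) as [H|[H|H]]; auto.
  - pose proof (fam_min_lt f i j Hf Hj H); lia.
  - pose proof (fam_min_lt f j i Hf Hi H); lia.
Qed.

Lemma fam_min_ge f i : is_family f -> inF f i -> (i <= min_int (fint f i))%nat.
Proof.
  intros Hf; induction i; intros Hi. lia.
  pose proof (fam_min_lt f i (S i) Hf Hi (Nat.lt_succ_diag_r i)).
  pose proof (IHi (inF_down f i (S i) Hi (Nat.le_succ_diag_r i))). lia.
Qed.

Lemma fam_srt f a k : is_family f -> Reach f (a + k) -> srt (map (fint f) (seq a k)).
Proof.
  intros Hf; revert a; induction k; intros a Hr; simpl. constructor.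
  apply srt_cons.
  - apply IHk. intros m Hm; apply Hr; lia.
  - intros b Hb. apply in_map_iff in Hb. destruct Hb as [j [<- Hj]]. apply in_seq in Hj.
    apply fam_lt; auto. apply Hr; lia. lia.
Qed.

End Basics.

Section Sums.
Variable x : nat -> R.

Definition nJ := real (normJ x).

Lemma normJ_fin : in_J x -> normJ x = Finite nJ.
Proof. intros H. unfold nJ. rewrite H. reflexivity. Qed.

Lemma sqrt_list_bound l : in_J x -> l <> nil -> srt l -> sqrt (sumsq_list x l) <= nJ.
Proof.
  intros HJ Hn Hs. destruct (Lub_Rbar_correct (fun r => exists l : list interval,
                l <> nil /\ pairwise_disjoint l /\ r = sqrt (sumsq_list x l))) as [Hub _].
  specialize (Hub (sqrt (sumsq_list x l))). fold (normJ x) in Hub.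
  rewrite (normJ_fin HJ) in Hub. apply Hub. exists l. split; auto. split; auto.
  apply srt_pd; auto.
Qed.

Lemma nJ_nonneg : in_J x -> 0 <= nJ.
Proof.
  intros HJ. eapply Rle_trans. apply sqrt_pos.
  apply (sqrt_list_bound (IFin 0 0 :: nil)); auto. discriminate. constructor; constructor.
Qed.

Lemma list_bound l : in_J x -> srt l -> sumsq_list x l <= nJ ^ 2.
Proof.
  intros HJ Hs. destruct l as [|a l]. simpl. nra.
  pose proof (sqrt_list_bound (a :: l) HJ ltac:(discriminate) Hs).
  pose proof (sumsq_nonneg x (a :: l)). pose proof (sqrt_pos (sumsq_list x (a :: l))).
  rewrite <- (sqrt_sqrt (sumsq_list x (a :: l))) by auto. nra.
Qed.

Lemma sum_split (u : nat -> R) d1 d2 :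
  sum_f_R0 u (d1 + S d2) = sum_f_R0 u d1 + sum_f_R0 (fun k => u (S d1 + k)%nat) d2.
Proof.
  induction d2.
  - rewrite Nat.add_1_r. simpl. rewrite Nat.add_0_r. reflexivity.
  - rewrite <- plus_n_Sm. simpl sum_f_R0 at 1. rewrite IHd2. simpl.
    replace (S (d1 + S d2)) with (S (d1 + S d2)) by lia.
    replace (d1 + S d2)%nat with (S (d1 + d2))%nat by lia. lra.
Qed.

Lemma isum_zero a d : (forall k, (a <= k <= a + d)%nat -> x k = 0) -> isum x (IFin a d) = 0.
Proof.
  intros H. simpl. induction d. simpl. apply H; lia.
  simpl. rewrite IHd. rewrite H. lra. lia. intros; apply H; lia.
Qed.

Lemma isum_pt a : isum x (IFin a 0) = x a.
Proof. simpl. rewrite Nat.add_0_r. reflexivity. Qed.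

Lemma ex_ser : in_J x -> forall a, ex_series (fun k => x (a + k)%nat).
Proof.
  intros HJ a. set (u := fun k => x (a + k)%nat).
  assert (HC : Cauchy_crit (fun n => sum_f_R0 u n)).
  { intros eps Heps. apply NNPP; intro Hno.
    assert (Hb : forall N, exists b d, (N <= b)%nat /\ eps ^ 2 <= (isum x (IFin b d)) ^ 2).
    { intros N.
      assert (H1 : exists n m, (N <= n)%nat /\ (N <= m)%nat /\
                 eps <= Rdist (sum_f_R0 u n) (sum_f_R0 u m)).
      { apply NNPP; intro H; apply Hno; exists N; intros n m Hn Hm.
        apply Rnot_le_lt; intro; apply H; exists n, m; auto. }
      destruct H1 as [n [m [Hn [Hm Hd]]]].
      assert (Hg : forall n m, (m < n)%nat ->
          sum_f_R0 u n - sum_f_R0 u m = isum x (IFin (a + S m) (n - S m))).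
      { intros n0 m0 Hlt. replace n0 with (m0 + S (n0 - S m0))%nat at 1 by lia.
        rewrite sum_split. simpl. unfold u.
        assert (sum_f_R0 (fun k : nat => x (a + S (m0 + k))%nat) (n0 - S m0) =
                sum_f_R0 (fun k : nat => x (a + S m0 + k)%nat) (n0 - S m0)).
        { apply sum_eq; intros; f_equal; lia. } lra. }
      destruct (Nat.lt_total m n) as [H|[H|H]].
      - exists (a + S m)%nat, (n - S m)%nat. split. lia. rewrite <- Hg by auto.
        unfold Rdist in Hd.
        rewrite <- (pow2_abs (sum_f_R0 u n - sum_f_R0 u m)). apply pow_incr. split. lra. exact Hd.
      - subst. unfold Rdist in Hd. rewrite Rminus_diag, Rabs_R0 in Hd. lra.
      - exists (a + S n)%nat, (m - S n)%nat. split. lia. rewrite <- Hg by auto.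
        unfold Rdist in Hd. rewrite Rabs_minus_sym in Hd.
        pose proof (Rabs_pos (sum_f_R0 u m - sum_f_R0 u n)).
        rewrite <- (pow2_abs (sum_f_R0 u m - sum_f_R0 u n)). apply pow_incr. split. lra. exact Hd. }
    assert (Hl : forall k N, exists l, srt l /\
        (forall K n, In K l -> in_int K n -> (N <= n)%nat) /\ INR k * eps ^ 2 <= sumsq_list x l).
    { induction k; intros N.
      - exists nil. split. constructor. split. intros K n []. simpl. lra.
      - destruct (Hb N) as [b [d [Hbn Hbe]]].
        destruct (IHk (S (b + d))) as [l [Hs [Hp Hv]]].
        exists (IFin b d :: l). split.
        + apply srt_cons; auto. intros K HK n m Hn Hm. simpl in Hn.
          pose proof (Hp K m HK Hm). lia.
        + split.
          * intros K n [<-|HK] Hn. simpl in Hn; lia. pose proof (Hp K n HK Hn). lia.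
          * simpl sumsq_list. rewrite S_INR. simpl in Hbe. simpl. lra. }
    destruct (INR_archimed (eps ^ 2) (nJ ^ 2)) as [k Hk]. nra.
    destruct (Hl k 0%nat) as [l [Hs [_ Hv]]].
    pose proof (list_bound l HJ Hs). lra. }
  destruct (Rcomplete.R_complete _ HC) as [l Hl].
  exists l. apply is_series_Reals. exact Hl.
Qed.

Definition rest (K : interval) c :=
  match K with IFin a d => IFin c (a + d - c) | IInf _ => IInf c end.

Lemma rest_pts K c n : in_int K c -> (in_int (rest K c) n <-> in_int K n /\ (c <= n)%nat).
Proof. destruct K; simpl; lia. Qed.

Lemma rest_min K c : min_int (rest K c) = c.
Proof. destruct K; reflexivity. Qed.

Lemma isum_split K c : in_J x -> (min_int K < c)%nat -> in_int K c ->
  isum x K = isum x (IFin (min_int K) (c - 1 - min_int K)) + isum x (rest K c).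
Proof.
  intros HJ Hlt Hc. destruct K as [a d|a]; simpl in *.
  - replace d with ((c - 1 - a) + S (a + d - c))%nat at 1 by lia.
    rewrite sum_split. f_equal. apply sum_eq; intros; f_equal; lia.
  - rewrite (Series_incr_n _ (c - a)) by (try lia; apply ex_ser; auto).
    f_equal. f_equal. lia. apply Series_ext; intros; f_equal; lia.
Qed.

Lemma isum_fin_split a d c : (a < c <= a + d)%nat ->
  isum x (IFin a d) = isum x (IFin a (c - 1 - a)) + isum x (IFin c (a + d - c)).
Proof.
  intros H. simpl.
  replace d with ((c - 1 - a) + S (a + d - c))%nat at 1 by lia.
  rewrite sum_split. f_equal. apply sum_eq; intros; f_equal; lia.
Qed.

Lemma good_fam f : in_J x -> x_norming x f ->
  forall eps, 0 < eps -> forall N0, Reach f N0 ->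
  exists n, (N0 <= n)%nat /\ Reach f n /\ nJ ^ 2 - eps <= psumsq x (fint f) n.
Proof.
  intros HJ [Hf Hn] eps He N0 HR. unfold norm_fam in Hn. rewrite (normJ_fin HJ) in Hn.
  unfold Reach, inF in *. destruct (fsize f) as [K|].
  - exists K. assert (N0 <= K)%nat.
    { destruct (Nat.le_gt_cases N0 K); auto. specialize (HR K H). lia. }
    split; auto. split; auto. injection Hn as Hn.
    pose proof (psum_nonneg x (fint f) K).
    rewrite <- (sqrt_sqrt (psumsq x (fint f) K)) by auto. rewrite Hn. lra.
  - set (u := fun n => sqrt (psumsq x (fint f) n)).
    assert (Hinc : forall n, u n <= u (S n)).
    { intros n; unfold u. apply sqrt_le_1_alt. apply psum_mono. lia. }
    pose proof (Lim_seq_correct u (ex_lim_seq_incr u Hinc)) as Hl.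
    fold u in Hn. rewrite Hn in Hl.
    pose proof (is_lim_seq_mult' u u nJ nJ Hl Hl) as H2.
    assert (H3 : is_lim_seq (fun n => psumsq x (fint f) n) (nJ * nJ)).
    { apply is_lim_seq_ext with (2 := H2). intros n; unfold u.
      apply sqrt_sqrt, psum_nonneg. }
    apply is_lim_seq_spec in H3. destruct (H3 (mkposreal eps He)) as [n0 Hn0].
    exists (Nat.max N0 n0). split. lia. split. auto.
    specialize (Hn0 (Nat.max N0 n0) ltac:(lia)). simpl in Hn0.
    apply Rabs_lt_between in Hn0. simpl. lra.
Qed.

Lemma fam_bound f n : in_J x -> is_family f -> Reach f n -> psumsq x (fint f) n <= nJ ^ 2.
Proof.
  intros HJ Hf HR. pose proof (list_bound _ HJ (fam_srt f 0 n Hf HR)).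
  rewrite sumsq_map_seq in H. simpl in H. lra.
Qed.

End Sums.

Section Exch.
Variable x : nat -> R.
Hypothesis HJ : in_J x.

Definition after_prev f i n := forall k m, (k < i)%nat -> in_int (fint f k) m -> (m < n)%nat.
Definition before_next f i n :=
  forall k m, (i < k)%nat -> inF f k -> in_int (fint f k) m -> (n < m)%nat.

Lemma ap_ge f i n : is_family f -> inF f i -> (min_int (fint f i) <= n)%nat -> after_prev f i n.
Proof.
  intros Hf Hi H k m Hk Hm. pose proof (fam_lt f k i Hf Hi Hk m _ Hm (in_int_min _)). lia.
Qed.

Lemma bn_le f i n n' : is_family f -> in_int (fint f i) n' -> (n <= n')%nat -> before_next f i n.
Proof.
  intros Hf Hn' H k m Hk HF Hm. pose proof (fam_lt f i k Hf HF Hk n' m Hn' Hm). lia.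
Qed.

Lemma pts_fi f i n : is_family f -> inF f i -> in_int (fint f i) n ->
  after_prev f i n /\ before_next f i n.
Proof.
  intros Hf Hi Hn. split. apply ap_ge; auto. apply in_int_ge; auto. apply bn_le with n; auto.
Qed.

Lemma ap_gt_max f i b n : is_family f -> inF f (S i) -> max_int (fint f i) = Some b ->
  (b < n)%nat -> after_prev f (S i) n.
Proof.
  intros Hf Hi Hb Hn k m Hk Hm. pose proof (in_int_max _ _ Hb).
  destruct (Nat.eq_dec k i). subst. pose proof (in_int_le_max _ _ _ Hb Hm). lia.
  pose proof (fam_lt f k i Hf (inF_down f i (S i) Hi ltac:(lia)) ltac:(lia) m b Hm H). lia.
Qed.

Lemma combine f i g j m n :
  is_family f -> is_family g -> inF f i -> m <> nil -> srt m ->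
  (forall K p, In K m -> in_int K p -> after_prev f i p /\ before_next g j p) ->
  (S j <= n)%nat -> Reach g n ->
  sumsq_list x m <= nJ x ^ 2 - psumsq x (fint f) i - (psumsq x (fint g) n - psumsq x (fint g) (S j)).
Proof.
  intros Hf Hg Hi Hm Hs Hp Hn HR.
  set (L1 := map (fint f) (seq 0 i) ++ m ++ map (fint g) (seq (S j) (n - S j))).
  assert (HRi : Reach f (0 + i)). { intros k Hk; apply inF_down with i; auto; lia. }
  assert (HRg : Reach g (S j + (n - S j))). { replace (S j + (n - S j))%nat with n by lia; auto. }
  assert (Hs2 : srt (m ++ map (fint g) (seq (S j) (n - S j)))).
  { apply srt_app; auto. apply fam_srt; auto.
    intros a b Ha Hb. apply in_map_iff in Hb. destruct Hb as [k [<- Hk]]. apply in_seq in Hk.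
    intros p q Hp' Hq. apply (proj2 (Hp a p Ha Hp') k q). lia. apply HR; lia. auto. }
  assert (HL : srt L1).
  { apply srt_app; auto. apply fam_srt; auto.
    intros a b Ha Hb. apply in_map_iff in Ha. destruct Ha as [k [<- Hk]]. apply in_seq in Hk.
    destruct m as [|K0 m']; [congruence|].
    assert (HK0 : In K0 (K0 :: m')) by (left; auto).
    destruct (Hp K0 (min_int K0) HK0 (in_int_min K0)) as [Ha0 Hb0].
    apply in_app_or in Hb. destruct Hb as [Hb|Hb].
    - intros p q Hp' Hq. apply (proj1 (Hp b q Hb Hq) k p). lia. auto.
    - apply in_map_iff in Hb. destruct Hb as [k' [<- Hk']]. apply in_seq in Hk'.
      intros p q Hp' Hq. pose proof (Ha0 k p ltac:(lia) Hp').
      pose proof (Hb0 k' q ltac:(lia) (HR k' ltac:(lia)) Hq). lia. }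
  pose proof (list_bound x L1 HJ HL). unfold L1 in H.
  rewrite !sumsq_app, !sumsq_map_seq in H.
  replace (S j + (n - S j))%nat with n in H by lia. rewrite Nat.add_0_l in H.
  change (psumsq x (fint f) 0) with 0 in H. lra.
Qed.

Lemma exch f g i j m1 m2 : x_norming x f -> x_norming x g -> inF f i -> inF g j ->
  m1 <> nil -> m2 <> nil -> srt m1 -> srt m2 ->
  (forall K p, In K m1 -> in_int K p -> after_prev f i p /\ before_next g j p) ->
  (forall K p, In K m2 -> in_int K p -> after_prev g j p /\ before_next f i p) ->
  sumsq_list x m1 + sumsq_list x m2 <= (isum x (fint f i)) ^ 2 + (isum x (fint g j)) ^ 2.
Proof.
  intros Hnf Hng Hi Hj Hm1 Hm2 Hs1 Hs2 Hp1 Hp2. apply le_epsilon; intros eps He.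
  destruct (good_fam x f HJ Hnf (eps / 2) ltac:(lra) (S i)) as [nf [Hnf1 [Hnf2 Hnf3]]].
  { intros k Hk; apply inF_down with i; auto; lia. }
  destruct (good_fam x g HJ Hng (eps / 2) ltac:(lra) (S j)) as [ng [Hng1 [Hng2 Hng3]]].
  { intros k Hk; apply inF_down with j; auto; lia. }
  destruct Hnf as [Hf _], Hng as [Hg _].
  pose proof (combine f i g j m1 ng Hf Hg Hi Hm1 Hs1 Hp1 Hng1 Hng2).
  pose proof (combine g j f i m2 nf Hg Hf Hj Hm2 Hs2 Hp2 Hnf1 Hnf2).
  rewrite psum_S in H, H0. lra.
Qed.

Lemma LR f i m : x_norming x f -> inF f i -> m <> nil -> srt m ->
  (forall K n, In K m -> in_int K n -> in_int (fint f i) n) ->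
  sumsq_list x m <= (isum x (fint f i)) ^ 2.
Proof.
  intros Hn Hi Hm Hs Hp.
  assert (Hf : is_family f) by apply Hn.
  pose proof (exch f f i i m (fint f i :: nil) Hn Hn Hi Hi Hm ltac:(discriminate) Hs
    ltac:(constructor; constructor)).
  simpl in H. lapply H.
  - intros H'; lapply H'. lra. intros K p [<-|[]] Hp'. apply pts_fi; auto.
  - intros K p HK Hp'. apply pts_fi; auto. eapply Hp; eauto.
Qed.

Lemma last_size f i : inF f i -> ~ inF f (S i) -> fsize f = Some (S i).
Proof. unfold inF; destruct (fsize f); intros; [f_equal; lia | tauto]. Qed.

Lemma part_min_S f i : x_norming_partition x f -> inF f i -> supp x (min_int (fint f i)).
Proof.
  intros [_ [H2 H3]] Hi. destruct (classic (inF f (S i))).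
  - apply (H2 i Hi H). - apply (H3 i (last_size f i Hi H)).
Qed.

Lemma zero_off n : ~ supp x n -> x n = 0.
Proof. unfold supp; intros; apply NNPP; auto. Qed.

Lemma least_ex (P : nat -> Prop) : (exists n, P n) -> exists n, P n /\ forall m, (m < n)%nat -> ~ P m.
Proof.
  intros H. destruct (Wf_nat.dec_inh_nat_subset_has_unique_least_element P
     (fun n => classic (P n)) H) as [n [[Hn Hl] _]].
  exists n; split; auto. intros m Hm HP. specialize (Hl m HP). lia.
Qed.

Lemma cover f n : x_norming_partition x f -> supp x n -> exists i, inF f i /\ in_int (fint f i) n.
Proof.
  intros Hp Hs. assert (Hf : is_family f) by apply Hp.
  apply NNPP; intro Hno.
  assert (Hno' : forall i, inF f i -> ~ in_int (fint f i) n) by eauto.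
  destruct (classic (exists i, inF f i /\ (n < min_int (fint f i))%nat)) as [Hex|Hnex].
  - destruct (least_ex _ Hex) as [i [[Hi Hlt] Hmin]].
    assert (Hap : after_prev f i n).
    { destruct i as [|i']. intros k m Hk; lia.
      destruct (Hf i' Hi) as [b [Hb _]].
      apply ap_gt_max with b; auto.
      assert (Hi' : inF f i') by (apply inF_down with (S i'); auto).
      assert (min_int (fint f i') <= n)%nat.
      { destruct (Nat.le_gt_cases (min_int (fint f i')) n); auto. exfalso; apply (Hmin i'); auto. }
      destruct (Nat.le_gt_cases n b); auto. exfalso. apply (Hno' i' Hi').
      apply in_int_conv with (min_int (fint f i')) b; auto. apply in_int_min. apply in_int_max; auto. }
    pose proof (exch f f i i (IFin n 0 :: fint f i :: nil) (fint f i :: nil)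
      (proj1 Hp) (proj1 Hp) Hi Hi ltac:(discriminate) ltac:(discriminate)).
    lapply H; [clear H; intro H|].
    lapply H; [clear H; intro H|]. lapply H; [clear H; intro H|]. lapply H; [clear H; intro H|].
    + cbn [sumsq_list fold_right] in H. rewrite isum_pt in H. apply Hs. nra.
    + intros K p [<-|[]] Hp'. apply pts_fi; auto.
    + intros K p [<-|[<-|[]]] Hp'.
      * simpl in Hp'. assert (p = n) by lia. subst. split; auto.
        apply bn_le with (min_int (fint f i)). auto. apply in_int_min. lia.
      * apply pts_fi; auto.
    + constructor; constructor.
    + apply srt_cons. apply srt_cons. constructor. intros b []. intros b [<-|[]].
      intros p q Hp' Hq. simpl in Hp'. pose proof (in_int_ge _ _ Hq). lia.
  - destruct Hp as [[_ Hnorm] [_ H3]]. unfold inF in *.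
    destruct (fsize f) as [K|] eqn:HK.
    + destruct K as [|i].
      * unfold norm_fam in Hnorm. rewrite HK in Hnorm. simpl in Hnorm.
        rewrite sqrt_0 in Hnorm. pose proof (list_bound x (IFin n 0 :: nil) HJ).
        lapply H; [|constructor; constructor]. intros H'. cbn [sumsq_list fold_right] in H'. rewrite isum_pt in H'.
        unfold nJ in H'. rewrite <- Hnorm in H'. simpl in H'. apply Hs. nra.
      * destruct (H3 i eq_refl) as [_ Hsup]. assert (Hi : inF f i) by (unfold inF; rewrite HK; lia).
        assert (min_int (fint f i) <= n)%nat.
        { destruct (Nat.le_gt_cases (min_int (fint f i)) n); auto. exfalso; apply Hnex; eauto. }
        unfold sup_eq_supp in Hsup. destruct (fint f i) as [a d|a] eqn:E; simpl in *.
        -- destruct Hsup as [_ Hsup]. apply (Hsup n). destruct (Nat.le_gt_cases n (a + d)); auto.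
           exfalso. apply (Hno' i ltac:(lia)). rewrite E. simpl. lia. auto.
        -- apply (Hno' i ltac:(lia)). rewrite E. simpl. lia.
    + apply Hnex. exists (S n). split. auto.
      pose proof (fam_min_ge f (S n) Hf ltac:(unfold inF; rewrite HK; auto)). lia.
Qed.

Lemma sc f i n : x_norming_partition x f -> inF f i -> supp x n ->
  (in_int (fint f i) n <-> (min_int (fint f i) <= n)%nat /\
     (inF f (S i) -> (n < min_int (fint f (S i)))%nat)).
Proof.
  intros Hp Hi Hs. assert (Hf : is_family f) by apply Hp. split.
  - intros Hn. split. apply in_int_ge; auto. intros HS.
    apply (fam_next_lt f i Hf HS n _ Hn (in_int_min _)).
  - intros [H1 H2]. destruct (cover f n Hp Hs) as [k [Hk Hkn]].
    destruct (Nat.lt_total k i) as [H|[H|H]].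
    + pose proof (fam_lt f k i Hf Hi H n _ Hkn (in_int_min _)). lia.
    + subst; auto.
    + assert (HS : inF f (S i)) by (apply inF_down with k; auto).
      specialize (H2 HS). destruct (Nat.eq_dec k (S i)). subst.
      pose proof (in_int_ge _ _ Hkn). lia.
      pose proof (fam_lt f (S i) k Hf Hk ltac:(lia) _ n (in_int_min _) Hkn). lia.
Qed.

End Exch.

Section Cross.
Variable x : nat -> R.
Hypothesis HJ : in_J x.

Lemma rest_rest K c c' : in_int K c -> (c <= c')%nat -> rest (rest K c) c' = rest K c'.
Proof. destruct K; simpl; intros; auto. f_equal. lia. Qed.

Lemma nz_pre f i c : x_norming_partition x f -> inF f i -> (min_int (fint f i) < c)%nat ->
  in_int (fint f i) c -> isum x (IFin (min_int (fint f i)) (c - 1 - min_int (fint f i))) <> 0.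
Proof.
  intros Hp Hi Hc Hin. pose proof (part_min_S x f i Hp Hi) as Hxa.
  set (a := min_int (fint f i)) in *.
  destruct (Nat.eq_dec c (S a)) as [E|E].
  - subst c. replace (S a - 1 - a)%nat with 0%nat by lia. rewrite isum_pt. auto.
  - pose proof (isum_split x (fint f i) c HJ Hc Hin) as H1. fold a in H1.
    pose proof (isum_fin_split x a (c - 1 - a) (S a) ltac:(lia)) as H2.
    replace (S a - 1 - a)%nat with 0%nat in H2 by lia.
    replace (a + (c - 1 - a) - S a)%nat with (c - 2 - a)%nat in H2 by lia.
    rewrite isum_pt in H2.
    assert (Ha : in_int (fint f i) a) by apply in_int_min.
    pose proof (LR x HJ f i (IFin a 0 :: IFin (S a) (c - 2 - a) :: rest (fint f i) c :: nil)
      (proj1 Hp) Hi ltac:(discriminate)) as H3.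
    lapply H3; [clear H3; intro H3|].
    lapply H3; [clear H3; intro H3|].
    + cbn [sumsq_list fold_right] in H3. rewrite isum_pt in H3. intros H0.
      apply Hxa. nra.
    + intros K n [<-|[<-|[<-|[]]]] Hn.
      * simpl in Hn. replace n with a by lia. auto.
      * simpl in Hn. apply in_int_conv with a c; auto. lia.
      * apply rest_pts in Hn; tauto.
    + apply srt_cons. apply srt_cons. apply srt_cons. constructor. intros b [].
      intros b [<-|[]] p q Hp' Hq. apply rest_pts in Hq; auto. simpl in Hp'. lia.
      intros b [<-|[<-|[]]] p q Hp' Hq. simpl in Hp', Hq. lia.
      apply rest_pts in Hq; auto. simpl in Hp'. lia.
Qed.

Lemma nz_suf f i c : x_norming_partition x f -> inF f i -> (min_int (fint f i) < c)%nat ->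
  in_int (fint f i) c -> x c <> 0 -> isum x (rest (fint f i) c) <> 0.
Proof.
  intros Hp Hi Hc Hin Hxc.
  set (a := min_int (fint f i)) in *.
  destruct (classic (in_int (fint f i) (S c))) as [HS|HS].
  - pose proof (isum_split x (fint f i) c HJ Hc Hin) as H1. fold a in H1.
    assert (HR : in_int (rest (fint f i) c) (S c)) by (apply rest_pts; auto).
    pose proof (isum_split x (rest (fint f i) c) (S c) HJ) as H2.
    rewrite rest_min in H2. specialize (H2 ltac:(lia) HR).
    replace (S c - 1 - c)%nat with 0%nat in H2 by lia. rewrite isum_pt in H2.
    rewrite rest_rest in H2 by auto.
    pose proof (LR x HJ f i (IFin a (c - 1 - a) :: IFin c 0 :: rest (fint f i) (S c) :: nil)
      (proj1 Hp) Hi ltac:(discriminate)) as H3.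
    lapply H3; [clear H3; intro H3|].
    lapply H3; [clear H3; intro H3|].
    + cbn [sumsq_list fold_right] in H3. rewrite isum_pt in H3. intros H0.
      apply Hxc. nra.
    + intros K n [<-|[<-|[<-|[]]]] Hn.
      * simpl in Hn. apply in_int_conv with a c; auto. apply in_int_min. lia.
      * simpl in Hn. replace n with c by lia. auto.
      * apply rest_pts in Hn; tauto.
    + apply srt_cons. apply srt_cons. apply srt_cons. constructor. intros b [].
      intros b [<-|[]] p q Hp' Hq. apply rest_pts in Hq; auto. simpl in Hp'. lia.
      intros b [<-|[<-|[]]] p q Hp' Hq. simpl in Hp', Hq. lia.
      apply rest_pts in Hq; auto. simpl in Hp'. lia.
  - destruct (fint f i) as [a' d|a'] eqn:E; simpl in Hin, HS; cbn [rest].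
    + replace (a' + d - c)%nat with 0%nat by lia. rewrite isum_pt. auto.
    + exfalso; apply HS; lia.
Qed.

Lemma no_cross f g i j b e :
  x_norming_partition x f -> x_norming_partition x g -> inF f i -> inF g j ->
  max_int (fint f i) = Some b ->
  (min_int (fint f i) < min_int (fint g j))%nat -> (min_int (fint g j) <= b)%nat ->
  supp x e -> in_int (fint g j) e -> (b < e)%nat -> False.
Proof.
  intros Hpf Hpg Hi Hj Hb Hac Hcb He Hge Hbe.
  assert (Hf : is_family f) by apply Hpf. assert (Hg : is_family g) by apply Hpg.
  set (a := min_int (fint f i)) in *. set (c := min_int (fint g j)) in *.
  destruct (cover x HJ f e Hpf He) as [k [Hk Hke]].
  assert (Hik : (i < k)%nat).
  { destruct (Nat.lt_total i k) as [H|[H|H]]; auto.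
    - subst. pose proof (in_int_le_max _ _ _ Hb Hke). lia.
    - pose proof (fam_lt f k i Hf Hi H e _ Hke (in_int_min _)). fold a in H0. lia. }
  assert (HSi : inF f (S i)) by (apply inF_down with k; auto).
  set (e' := min_int (fint f (S i))).
  assert (He'e : (e' <= e)%nat).
  { destruct (Nat.eq_dec k (S i)). subst k. apply in_int_ge; auto.
    pose proof (fam_lt f (S i) k Hf Hk ltac:(lia) _ e (in_int_min _) Hke). fold e' in H. lia. }
  assert (Hbe' : (b < e')%nat).
  { destruct (Hf i HSi) as [b' [Hb' Hlt]]. rewrite Hb in Hb'. injection Hb' as <-. auto. }
  assert (Hse' : supp x e') by (apply part_min_S; auto).
  assert (Hge' : in_int (fint g j) e') by (apply in_int_conv with c e; [apply in_int_min|auto|lia]).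
  assert (Hgb : in_int (fint g j) (S b)) by (apply in_int_conv with c e; [apply in_int_min|auto|lia]).
  assert (Hzero : forall p, (b < p < e')%nat -> x p = 0).
  { intros p Hp. apply zero_off. intros Hsp. destruct (cover x HJ f p Hpf Hsp) as [k' [Hk' Hkp]].
    destruct (Nat.le_gt_cases k' i).
    - destruct (Nat.eq_dec k' i). subst. pose proof (in_int_le_max _ _ _ Hb Hkp). lia.
      pose proof (fam_lt f k' i Hf Hi ltac:(lia) p _ Hkp (in_int_min _)). fold a in H0. lia.
    - destruct (Nat.eq_dec k' (S i)). subst. pose proof (in_int_ge _ _ Hkp). fold e' in H0. lia.
      pose proof (fam_lt f (S i) k' Hf Hk' ltac:(lia) _ p (in_int_min _) Hkp). fold e' in H0. lia. }
  destruct (fint f i) as [a0 d|a0] eqn:Ef; [|discriminate].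
  simpl in Hb. injection Hb as Hb. simpl in a. subst a.
  set (A := isum x (IFin a0 (c - 1 - a0))).
  set (B := isum x (IFin c (b - c))).
  set (C := isum x (rest (fint g j) (S b))).
  assert (HinFi : forall p, (a0 <= p <= b)%nat -> in_int (fint f i) p).
  { intros p Hp. rewrite Ef. simpl. lia. }
  assert (Eqf : isum x (fint f i) = A + B).
  { pose proof (isum_split x (fint f i) c HJ) as H. rewrite Ef in H. simpl min_int in H.
    specialize (H Hac ltac:(simpl; lia)). rewrite Ef, H. unfold A, B. cbn [rest].
    replace (a0 + d - c)%nat with (b - c)%nat by lia. reflexivity. }
  assert (Eqg : isum x (fint g j) = B + C).
  { pose proof (isum_split x (fint g j) (S b) HJ ltac:(fold c; lia) Hgb) as H. fold c in H.
    rewrite H. unfold B, C. replace (S b - 1 - c)%nat with (b - c)%nat by lia. reflexivity. }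
  assert (HAB : A ^ 2 + B ^ 2 <= (A + B) ^ 2).
  { rewrite <- Eqf. pose proof (LR x HJ f i (IFin a0 (c - 1 - a0) :: IFin c (b - c) :: nil)
      (proj1 Hpf) Hi ltac:(discriminate)) as H3.
    lapply H3; [clear H3; intro H3|].
    lapply H3; [clear H3; intro H3|].
    + cbn [sumsq_list fold_right] in H3. unfold A, B. lra.
    + intros K n [<-|[<-|[]]] Hn; simpl in Hn; apply HinFi; lia.
    + apply srt_cons. apply srt_cons. constructor. intros b0 [].
      intros b0 [<-|[]] p q Hp' Hq. simpl in Hp', Hq. lia. }
  assert (HBC : B ^ 2 + C ^ 2 <= (B + C) ^ 2).
  { rewrite <- Eqg. pose proof (LR x HJ g j (IFin c (b - c) :: rest (fint g j) (S b) :: nil)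
      (proj1 Hpg) Hj ltac:(discriminate)) as H3.
    lapply H3; [clear H3; intro H3|].
    lapply H3; [clear H3; intro H3|].
    + cbn [sumsq_list fold_right] in H3. unfold B, C. lra.
    + intros K n [<-|[<-|[]]] Hn.
      * simpl in Hn. apply in_int_conv with c (S b); auto. apply in_int_min. lia.
      * apply rest_pts in Hn; tauto.
    + apply srt_cons. apply srt_cons. constructor. intros b0 [].
      intros b0 [<-|[]] p q Hp' Hq. apply rest_pts in Hq; auto. simpl in Hp'. lia. }
  set (W := match fint g j with IFin c' d' => IFin a0 (c' + d' - a0) | IInf _ => IInf a0 end).
  assert (HW : isum x W = A + B + C).
  { assert (Hc : in_int (fint g j) c) by apply in_int_min.
    assert (HWc : in_int W c).
    { unfold W; destruct (fint g j); simpl in *; lia. }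
    pose proof (isum_split x W c HJ) as H.
    assert (min_int W = a0) by (unfold W; destruct (fint g j); reflexivity).
    rewrite H0 in H. specialize (H Hac HWc). rewrite H.
    assert (rest W c = fint g j).
    { unfold W. unfold c in *. destruct (fint g j); simpl in *; auto. f_equal; lia. }
    rewrite H1, Eqg. unfold A. lra. }
  assert (HAC : (A + B + C) ^ 2 + B ^ 2 <= (A + B) ^ 2 + (B + C) ^ 2).
  { rewrite <- HW, <- Eqf, <- Eqg.
    pose proof (exch x HJ f g i j (W :: nil) (IFin c (b - c) :: nil) (proj1 Hpf) (proj1 Hpg)
      Hi Hj ltac:(discriminate) ltac:(discriminate) ltac:(constructor; constructor)
      ltac:(constructor; constructor)) as H3.
    lapply H3; [clear H3; intro H3|].
    lapply H3; [clear H3; intro H3|].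
    + cbn [sumsq_list fold_right] in H3. unfold B. lra.
    + intros K p [<-|[]] Hp. simpl in Hp. split.
      * apply ap_ge; auto. apply in_int_ge. apply in_int_conv with c (S b); auto.
        apply in_int_min. lia.
      * apply bn_le with b; auto. apply HinFi; lia. lia.
    + intros K p [<-|[]] Hp. split.
      * apply ap_ge; auto. rewrite Ef. simpl. unfold W in Hp.
        destruct (fint g j); simpl in Hp; lia.
      * unfold W in Hp. destruct (fint g j) as [c' d'|c'] eqn:Eg; simpl in Hp.
        -- assert (Hcc : (a0 < c')%nat).
           { pose proof Hac as H0. unfold c in H0. simpl in H0. exact H0. }
           apply bn_le with (c' + d')%nat; auto. rewrite Eg; simpl; lia. lia.
        -- apply bn_le with (Nat.max p c'); auto. rewrite Eg; simpl; lia. lia. }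
  assert (HA : A <> 0).
  { pose proof (nz_pre f i c Hpf Hi) as H. rewrite Ef in H. simpl in H.
    apply H. lia. lia. }
  assert (HB : B <> 0).
  { pose proof (nz_pre g j (S b) Hpg Hj ltac:(fold c; lia) Hgb) as H. fold c in H.
    replace (S b - 1 - c)%nat with (b - c)%nat in H by lia. exact H. }
  assert (HC : C <> 0).
  { unfold C. destruct (Nat.eq_dec e' (S b)) as [E|E].
    - rewrite <- E. apply nz_suf; auto. fold c. lia.
    - assert (HR : in_int (rest (fint g j) (S b)) e') by (apply rest_pts; auto; lia).
      pose proof (isum_split x (rest (fint g j) (S b)) e' HJ) as H. rewrite rest_min in H.
      specialize (H ltac:(lia) HR). rewrite rest_rest in H by (auto; lia).
      rewrite isum_zero in H. rewrite H, Rplus_0_l. apply nz_suf; auto. fold c; lia.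
      intros k0 Hk0. apply Hzero. lia. }
  assert (HAB' : 0 < A * B).
  { assert (A * B <> 0) by (apply Rmult_integral_contrapositive; auto). nra. }
  assert (HBC' : 0 < B * C).
  { assert (B * C <> 0) by (apply Rmult_integral_contrapositive; auto). nra. }
  assert (0 < (A * B) * (B * C)) by (apply Rmult_lt_0_compat; auto).
  assert (0 < B * B) by nra.
  nra.
Qed.

End Cross.

Definition inO (sz : option nat) (p : nat) : Prop :=
  match sz with Some k => (p < k)%nat | None => True end.

Fixpoint cntf (pb : nat -> nat) (r : nat) : nat :=
  match r with O => O | S r' => (cntf pb r' + pb r')%nat end.

Lemma cntf_mono pb r r' : (r <= r')%nat -> (cntf pb r <= cntf pb r')%nat.
Proof. induction 1; simpl; lia. Qed.

Lemma choice_fun {A B : Type} (inh : inhabited B) (Q : A -> B -> Prop) :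
  (forall a, exists b, Q a b) -> exists g : A -> B, forall a, Q a (g a).
Proof.
  intros H. exists (fun a => epsilon inh (Q a)). intros a. apply epsilon_spec. auto.
Qed.

Lemma enum (P : nat -> Prop) : exists sz (e cnt : nat -> nat),
  (forall p, inO sz p -> P (e p)) /\
  (forall p q, inO sz q -> (p < q)%nat -> (e p < e q)%nat) /\
  (forall r, P r -> exists p, inO sz p /\ e p = r) /\
  cnt 0%nat = 0%nat /\
  (forall r, P r -> cnt (S r) = S (cnt r) /\ e (cnt r) = r) /\
  (forall r, ~ P r -> cnt (S r) = cnt r) /\
  (forall r q, (q < cnt r)%nat -> inO sz q).
Proof.
  set (pb := fun r => if excluded_middle_informative (P r) then 1%nat else 0%nat).
  set (cnt := cntf pb).
  assert (HSP : forall r, P r -> cnt (S r) = S (cnt r)).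
  { intros r H. unfold cnt; simpl. unfold pb. destruct (excluded_middle_informative (P r)); [lia|tauto]. }
  assert (HSn : forall r, ~ P r -> cnt (S r) = cnt r).
  { intros r H. unfold cnt; simpl. unfold pb. destruct (excluded_middle_informative (P r)); [tauto|lia]. }
  assert (Hmono : forall r r', (r <= r')%nat -> (cnt r <= cnt r')%nat) by (intros; apply cntf_mono; auto).
  assert (Hex : forall NN q, (q < cnt NN)%nat -> exists r, P r /\ cnt r = q).
  { intros NN; induction NN; intros q Hq. unfold cnt in Hq; simpl in Hq. lia.
    destruct (classic (P NN)) as [HP|HP].
    - rewrite HSP in Hq by auto. destruct (Nat.eq_dec q (cnt NN)). exists NN; auto.
      apply IHNN; lia.
    - rewrite HSn in Hq by auto. auto. }
  assert (Hsz : exists sz, forall q, inO sz q <-> exists r, (q < cnt r)%nat).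
  { destruct (classic (exists K, forall r, (cnt r <= K)%nat)) as [[K HK]|HnB].
    - assert (Hmax : forall K, (forall r, (cnt r <= K)%nat) -> exists r0, forall r, (cnt r <= cnt r0)%nat).
      { clear HK. intros K0. induction K0 as [|K' IH]; intros HK'.
        - exists 0%nat. intros r. specialize (HK' r). simpl. lia.
        - destruct (classic (exists r, cnt r = S K')) as [[r0 Hr0]|Hn].
          + exists r0. intros r. rewrite Hr0. auto.
          + apply IH. intros r. specialize (HK' r). destruct (Nat.eq_dec (cnt r) (S K')).
            exfalso; eauto. lia. }
      destruct (Hmax K HK) as [r0 Hr0]. exists (Some (cnt r0)). intros q; simpl. split.
      + intros; exists r0; auto. + intros [r Hr]. specialize (Hr0 r). lia.
    - exists None. intros q; simpl. split; auto. intros _.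
      apply NNPP; intro H. apply HnB. exists q. intros r. destruct (Nat.le_gt_cases (cnt r) q); auto.
      exfalso; apply H; exists r; auto. }
  destruct Hsz as [sz Hsz].
  set (e := fun q => epsilon (inhabits 0%nat) (fun r => P r /\ cnt r = q)).
  assert (He : forall q, inO sz q -> P (e q) /\ cnt (e q) = q).
  { intros q Hq. apply Hsz in Hq. destruct Hq as [NN HR]. apply epsilon_spec. eapply Hex; eauto. }
  assert (Hinj : forall r, P r -> e (cnt r) = r).
  { intros r Hr. assert (Hq : inO sz (cnt r)) by (apply Hsz; exists (S r); rewrite HSP; auto).
    destruct (He _ Hq) as [HP Hc]. destruct (Nat.lt_total (e (cnt r)) r) as [H|[H|H]]; auto.
    - pose proof (Hmono (S (e (cnt r))) r H). rewrite HSP in H0 by auto. lia.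
    - pose proof (Hmono (S r) (e (cnt r)) H). rewrite HSP in H0 by auto. lia. }
  exists sz, e, cnt. split; [|split; [|split; [|split; [|split; [|split]]]]].
  - intros p Hp; apply He; auto.
  - intros p q Hq Hpq. assert (Hp : inO sz p).
    { apply Hsz. apply Hsz in Hq. destruct Hq as [r Hr]. exists r; lia. }
    destruct (He p Hp), (He q Hq). destruct (Nat.le_gt_cases (e q) (e p)); auto.
    pose proof (Hmono _ _ H3). lia.
  - intros r Hr. exists (cnt r). split. apply Hsz; exists (S r); rewrite HSP; auto. auto.
  - reflexivity.
  - intros r Hr. split; auto.
  - auto.
  - intros r q Hq. apply Hsz. eauto.
Qed.

Section Lam.
Variable x : nat -> R.
Hypothesis HJ : in_J x.

Definition Af (f : ifamily) r := exists i, inF f i /\ min_int (fint f i) = r.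

Lemma fam_min_lt_inv f i k : is_family f -> inF f i -> inF f k ->
  (min_int (fint f i) < min_int (fint f k))%nat -> (i < k)%nat.
Proof.
  intros Hf Hi Hk H. destruct (Nat.lt_total i k) as [H'|[H'|H']]; auto. subst; lia.
  pose proof (fam_min_lt f k i Hf Hi H'). lia.
Qed.

Lemma fcount f : is_family f -> exists cA : nat -> nat, cA 0%nat = 0%nat /\
  (forall r, Af f r -> inF f (cA r) /\ min_int (fint f (cA r)) = r /\ cA (S r) = S (cA r)) /\
  (forall r, ~ Af f r -> cA (S r) = cA r) /\
  (forall r i, inF f i -> (min_int (fint f i) < r)%nat -> (i < cA r)%nat).
Proof.
  intros Hf.
  set (Q := fun r c => (forall i, (i < c)%nat -> inF f i /\ (min_int (fint f i) < r)%nat) /\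
                       ~ (inF f c /\ (min_int (fint f c) < r)%nat)).
  assert (HQex : forall r, exists c, Q r c).
  { intros r. destruct (least_ex (fun c => ~ (inF f c /\ (min_int (fint f c) < r)%nat))) as [c [Hc Hl]].
    - exists r. intros [H1 H2]. pose proof (fam_min_ge f r Hf H1). lia.
    - exists c. split; auto. intros i Hi. apply NNPP. apply Hl; auto. }
  assert (HQu : forall r c c', Q r c -> Q r c' -> c = c').
  { intros r c c' [H1 H2] [H1' H2']. destruct (Nat.lt_total c c') as [H|[H|H]]; auto.
    exfalso; apply H2; auto. exfalso; apply H2'; auto. }
  destruct (choice_fun (inhabits 0%nat) Q HQex) as [cA HcA].
  exists cA. split; [|split; [|split]].
  - apply (HQu 0%nat). auto. split. intros; lia. intros [_ H]; lia.
  - intros r [i [Hi Hm]].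
    assert (Q r i).
    { split. intros k Hk. split. apply inF_down with i; auto. lia.
      pose proof (fam_min_lt f k i Hf Hi Hk). lia. intros [_ H]; lia. }
    assert (Q (S r) (S i)).
    { split. intros k Hk. split. apply inF_down with i; auto. lia.
      destruct (Nat.eq_dec k i). subst; lia. pose proof (fam_min_lt f k i Hf Hi ltac:(lia)). lia.
      intros [H1 H2]. pose proof (fam_min_lt f i (S i) Hf H1 ltac:(lia)). lia. }
    rewrite (HQu r (cA r) i (HcA r) H). rewrite (HQu (S r) (cA (S r)) (S i) (HcA (S r)) H0). auto.
  - intros r Hn. apply (HQu (S r)); auto. destruct (HcA r) as [H1 H2]. split.
    + intros k Hk. destruct (H1 k Hk). split; auto.
    + intros [H3 H4]. destruct (Nat.eq_dec (min_int (fint f (cA r))) r).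
      apply Hn; exists (cA r); auto. apply H2; split; auto; lia.
  - intros r i Hi Hr. destruct (HcA r) as [H1 H2]. destruct (Nat.lt_ge_cases i (cA r)); auto.
    exfalso. apply H2. split. apply inF_down with i; auto.
    destruct (Nat.eq_dec (cA r) i). subst; auto.
    pose proof (fam_min_lt f (cA r) i Hf Hi ltac:(lia)). lia.
Qed.

Definition GoodB (f : ifamily) i sz (e : nat -> nat) p :=
  inF f i /\ min_int (fint f i) = e p /\
  ((inF f (S i) /\ inO sz (S p) /\ min_int (fint f (S i)) = e (S p)) \/
   (~ inF f (S i) /\ ~ inO sz (S p))).

Section WithEnum.
Variables (P : nat -> Prop) (sz : option nat) (e : nat -> nat).
Hypothesis E1 : forall p, inO sz p -> P (e p).
Hypothesis E2 : forall p q, inO sz q -> (p < q)%nat -> (e p < e q)%nat.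
Hypothesis E3 : forall r, P r -> exists p, inO sz p /\ e p = r.

Lemma inO_down p q : inO sz q -> (p <= q)%nat -> inO sz p.
Proof. unfold inO; destruct sz; auto; lia. Qed.

Lemma e_le p q : inO sz q -> (p <= q)%nat -> (e p <= e q)%nat.
Proof. intros Hq H. destruct (Nat.eq_dec p q). subst; lia. pose proof (E2 p q Hq ltac:(lia)); lia. Qed.

Lemma e_lt_inv p q : inO sz p -> inO sz q -> (e p < e q)%nat -> (p < q)%nat.
Proof.
  intros Hp Hq H. destruct (Nat.lt_ge_cases p q); auto. pose proof (e_le q p Hp H0). lia.
Qed.

Lemma next_after p r : inO sz p -> P r -> (e p < r)%nat -> inO sz (S p) /\ (e (S p) <= r)%nat.
Proof.
  intros Hp Hr H. destruct (E3 r Hr) as [q [Hq <-]]. pose proof (e_lt_inv p q Hp Hq H).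
  split. apply inO_down with q; auto. apply e_le; auto.
Qed.

Variables f g : ifamily.
Hypothesis Hpf : x_norming_partition x f.
Hypothesis Hpg : x_norming_partition x g.
Hypothesis HP : forall r, P r <-> Af f r \/ Af g r.

Lemma lam_sub i p r' : inF f i -> min_int (fint f i) = e p -> inO sz p -> inO sz (S p) ->
  e (S p) = r' -> Af g r' -> in_int (fint f i) r' -> exists m, GoodB g m sz e p.
Proof.
  intros Hi Hmi Hp HSp Her' [j' [Hj' Hmj']] Hin.
  assert (Hf : is_family f) by apply Hpf. assert (Hg : is_family g) by apply Hpg.
  set (r := e p) in *.
  assert (Hrr' : (r < r')%nat) by (subst r'; apply E2; auto).
  assert (Hsr : supp x r) by (rewrite <- Hmi; apply part_min_S; auto).
  destruct (cover x HJ g r Hpg Hsr) as [m [Hm Hrm]].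
  pose proof (in_int_ge _ _ Hrm) as Hcm.
  assert (Hmj : (m < j')%nat).
  { destruct (Nat.lt_ge_cases m j'); auto. exfalso.
    destruct (Nat.eq_dec m j'). subst. lia.
    pose proof (fam_min_lt g j' m Hg Hm ltac:(lia)). lia. }
  assert (HSm : inF g (S m)) by (apply inF_down with j'; auto).
  assert (Hc1 : min_int (fint g (S m)) = r').
  { assert (H1 : (min_int (fint g (S m)) <= r')%nat).
    { destruct (Nat.eq_dec (S m) j'). subst; lia. pose proof (fam_min_lt g (S m) j' Hg Hj' ltac:(lia)). lia. }
    assert (H2 : (r < min_int (fint g (S m)))%nat) by (apply (fam_next_lt g m Hg HSm); auto; apply in_int_min).
    assert (HP1 : P (min_int (fint g (S m)))) by (apply HP; right; exists (S m); auto).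
    destruct (next_after p _ Hp HP1 H2). lia. }
  destruct (Nat.eq_dec (min_int (fint g m)) r) as [E|E].
  - exists m. split; auto. split; auto. left. split; auto. split; auto. congruence.
  - exfalso. destruct (Hg m HSm) as [bm [Hbm Hlt]].
    apply (no_cross x HJ g f m i bm r' Hpg Hpf Hm Hi Hbm).
    + lia. + rewrite Hmi. apply (in_int_le_max _ _ _ Hbm Hrm).
    + subst r'. rewrite <- Hmj'. apply part_min_S; auto.
    + auto. + lia.
Qed.

Lemma lam i p : inF f i -> min_int (fint f i) = e p -> inO sz p ->
  (exists i', GoodB f i' sz e p) \/ (exists j, GoodB g j sz e p).
Proof.
  intros Hi Hmi Hp.
  assert (Hf : is_family f) by apply Hpf. assert (Hg : is_family g) by apply Hpg.
  destruct (classic (inF f (S i))) as [HS|HS].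
  - set (a' := min_int (fint f (S i))).
    assert (HPa : P a') by (apply HP; left; exists (S i); auto).
    assert (Hlt : (e p < a')%nat) by (rewrite <- Hmi; apply fam_min_lt; auto).
    destruct (next_after p a' Hp HPa Hlt) as [HSp Hle].
    destruct (Nat.eq_dec (e (S p)) a') as [E|E].
    + left. exists i. split; [auto|split; [auto|left; auto]].
    + right. assert (HPr := E1 (S p) HSp). apply HP in HPr. destruct HPr as [[k [Hk Hmk]]|HA].
      * exfalso. assert (e p < e (S p))%nat by (apply E2; auto).
        pose proof (fam_min_lt_inv f i k Hf Hi Hk ltac:(lia)).
        pose proof (fam_min_lt_inv f k (S i) Hf Hk HS ltac:(fold a'; lia)). lia.
      * apply (lam_sub i p (e (S p))); auto.
        assert (Hs : supp x (e (S p))).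
        { destruct HA as [j [Hj Hmj]]. rewrite <- Hmj. apply part_min_S; auto. }
        apply (sc x HJ f i _ Hpf Hi Hs). split.
        rewrite Hmi. apply Nat.lt_le_incl. apply E2; auto. intros _; fold a'; lia.
  - destruct (classic (inO sz (S p))) as [HSp|HSp].
    + right. assert (HPr := E1 (S p) HSp). apply HP in HPr. destruct HPr as [[k [Hk Hmk]]|HA].
      * exfalso. assert (e p < e (S p))%nat by (apply E2; auto).
        pose proof (fam_min_lt_inv f i k Hf Hi Hk ltac:(lia)). apply HS.
        apply inF_down with k; auto.
      * apply (lam_sub i p (e (S p))); auto.
        assert (Hs : supp x (e (S p))).
        { destruct HA as [j [Hj Hmj]]. rewrite <- Hmj. apply part_min_S; auto. }
        apply (sc x HJ f i _ Hpf Hi Hs). split.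
        rewrite Hmi. apply Nat.lt_le_incl. apply E2; auto. intros H; tauto.
    + left. exists i. split; [auto|split; [auto|right; auto]].
Qed.

End WithEnum.
End Lam.

Fixpoint buildl (q : nat -> option interval) (r : nat) : list interval :=
  match r with
  | O => nil
  | S r' => buildl q r' ++ match q r' with Some K => K :: nil | None => nil end
  end.

Lemma greatest_ex (Q : nat -> Prop) p0 B : Q p0 -> (forall p, Q p -> (p <= B)%nat) ->
  exists p, Q p /\ forall q, Q q -> (q <= p)%nat.
Proof.
  intros H0 HB.
  assert (Hg : forall d p, (B - p)%nat = d -> Q p -> exists p', Q p' /\ forall q, Q q -> (q <= p')%nat).
  { intros d. induction d as [d IH] using Wf_nat.lt_wf_ind. intros p Hd Hp.
    destruct (classic (exists q, Q q /\ (p < q)%nat)) as [[q [Hq Hpq]]|Hn].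
    - pose proof (HB q Hq). apply (IH (B - q)%nat) with q; auto. lia.
    - exists p. split; auto. intros q Hq. destruct (Nat.le_gt_cases q p); auto.
      exfalso; apply Hn; eauto. }
  eapply Hg; eauto.
Qed.

Lemma sqrt_close nj eps s : 0 <= nj -> 0 < eps -> 0 <= s -> s <= nj ^ 2 ->
  nj ^ 2 - (eps / 2) ^ 2 <= s -> Rabs (sqrt s - nj) < eps.
Proof.
  intros H1 H2 H3 H4 H5. pose proof (sqrt_pos s) as Ht. pose proof (sqrt_sqrt s H3) as Ht2.
  set (t := sqrt s) in *.
  assert (Htn : t <= nj) by nra.
  assert (Hu : (nj - t) ^ 2 <= (eps / 2) ^ 2) by nra.
  assert (nj - t <= eps / 2) by nra.
  rewrite Rabs_left1 by lra. lra.
Qed.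

Lemma e_ge sz e : (forall p q, inO sz q -> (p < q)%nat -> (e p < e q)%nat) ->
  forall p, inO sz p -> (p <= e p)%nat.
Proof.
  intros E2 p. induction p; intros Hp. lia.
  assert (inO sz p) by (unfold inO in *; destruct sz; auto; lia).
  pose proof (E2 p (S p) Hp ltac:(lia)). specialize (IHp H). lia.
Qed.

Lemma covers_gen x sz e Nf f i : in_J x -> x_norming_partition x f ->
  (forall p q, inO sz q -> (p < q)%nat -> (e p < e q)%nat) ->
  (forall r, Af f r -> exists p, inO sz p /\ e p = r) ->
  (forall p n, inO sz p -> supp x n ->
     (in_int (Nf p) n <-> (e p <= n)%nat /\ (inO sz (S p) -> (n < e (S p))%nat))) ->
  inF f i -> exists K, index_subinterval (mkIFamily sz Nf) K /\
                       covers_supp x (fint f i) (mkIFamily sz Nf) K.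
Proof.
  intros HJ Hp E2 E3 NSC Hi.
  assert (Hf : is_family f) by apply Hp.
  assert (Hdown : forall p q, inO sz q -> (p <= q)%nat -> inO sz p)
    by (intros p q; unfold inO; destruct sz; auto; lia).
  destruct (E3 (min_int (fint f i))) as [p0 [Hp0 Hep0]]. exists i; auto.
  set (inK := fun p => inO sz p /\ (p0 <= p)%nat /\
       (inF f (S i) -> (e p < min_int (fint f (S i)))%nat)).
  assert (HK : exists K, forall p, in_int K p <-> inK p).
  { destruct (classic (inF f (S i))) as [HS|HS].
    - destruct (E3 (min_int (fint f (S i)))) as [p1 [Hp1 Hep1]]. exists (S i); auto.
      assert (p0 < p1)%nat.
      { apply (e_lt_inv sz e E2); auto. rewrite Hep0, Hep1. apply fam_min_lt; auto. }
      exists (IFin p0 (p1 - 1 - p0)). intros p. unfold inK; simpl. split.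
      + intros Hpp. split. apply Hdown with p1; auto; lia. split. lia. intros _.
        rewrite <- Hep1. apply E2; auto. lia.
      + intros [Hpo [Hpp Hlt]]. specialize (Hlt HS). rewrite <- Hep1 in Hlt.
        pose proof (e_lt_inv sz e E2 p p1 Hpo Hp1 Hlt). lia.
    - destruct sz as [k|] eqn:Esz.
      + exists (IFin p0 (k - 1 - p0)). intros p. unfold inK, inO in *; simpl. split.
        * intros. split. lia. split. lia. tauto.
        * intros [H1 [H2 _]]. lia.
      + exists (IInf p0). intros p. unfold inK, inO; simpl. split.
        * intros. split; auto. split. lia. tauto.
        * tauto. }
  destruct HK as [K HK]. exists K. split.
  - intros p Hpk. apply HK in Hpk. apply Hpk.
  - intros n. split.
    + intros [Hn Hsn]. apply (sc x HJ f i n Hp Hi Hsn) in Hn. destruct Hn as [Hn1 Hn2].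
      destruct (greatest_ex (fun p => inO sz p /\ (e p <= n)%nat) p0 n) as [p [[Hpo Hpn] Hmax]].
      { split; auto. lia. }
      { intros p [Hpo Hpn]. pose proof (e_ge sz e E2 p Hpo). lia. }
      exists p. split; [|split; auto].
      * apply HK. split; auto. split. apply Hmax. split; auto. lia.
        intros HS. specialize (Hn2 HS). lia.
      * apply NSC; auto. split; auto. intros HSp.
        destruct (Nat.lt_ge_cases n (e (S p))); auto.
        specialize (Hmax (S p) (conj HSp H)). lia.
    + intros [p [Hpk [Hnp Hsn]]]. split; auto. apply HK in Hpk. destruct Hpk as [Hpo [Hpp Hlt]].
      apply NSC in Hnp; auto. destruct Hnp as [Hnp1 Hnp2].
      apply (sc x HJ f i n Hp Hi Hsn). split.
      * rewrite <- Hep0. pose proof (e_le sz e E2 p0 p Hpo Hpp). lia.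
      * intros HS. specialize (Hlt HS).
        destruct (E3 (min_int (fint f (S i)))) as [p1 [Hp1 Hep1]]. exists (S i); auto.
        rewrite <- Hep1 in Hlt |- *. pose proof (e_lt_inv sz e E2 p p1 Hpo Hp1 Hlt).
        assert (HSp : inO sz (S p)) by (apply Hdown with p1; auto).
        specialize (Hnp2 HSp). pose proof (e_le sz e E2 (S p) p1 Hp1 ltac:(lia)). lia.
Qed.

Lemma before_start f (cA : nat -> nat) : is_family f ->
  (forall r, Af f r -> inF f (cA r) /\ min_int (fint f (cA r)) = r) ->
  forall s r m, Af f s -> Af f r -> (s < r)%nat -> in_int (fint f (cA s)) m -> (m < r)%nat.
Proof.
  intros Hf Hc s r m Hs Hr Hsr Hm. destruct (Hc s Hs) as [H1 H2]. destruct (Hc r Hr) as [H3 H4].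
  assert (cA s < cA r)%nat by (apply fam_min_lt_inv with f; auto; lia).
  pose proof (fam_lt f (cA s) (cA r) Hf H3 H m _ Hm (in_int_min _)). lia.
Qed.

Theorem corollary3p10 (x : nat -> R) (I L : ifamily) :
  in_J x ->
  x_norming_partition x I ->
  x_norming_partition x L ->
  exists N : ifamily,
    x_norming_partition x N /\
    (forall p, inF N p ->
       (exists i, inF I i /\ same_interval (fint N p) (fint I i)) \/
       (exists j, inF L j /\ same_interval (fint N p) (fint L j))) /\
    (forall i, inF I i ->
       exists K, index_subinterval N K /\ covers_supp x (fint I i) N K) /\
    (forall j, inF L j ->
       exists K, index_subinterval N K /\ covers_supp x (fint L j) N K).
Proof.
  intros HJ HpI HpL.
  assert (HfI : is_family I) by apply HpI. assert (HfL : is_family L) by apply HpL.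
  set (P := fun r => Af I r \/ Af L r).
  destruct (enum P) as [sz [e [cnt [E1 [E2 [E3 [C0 [CP [CN CR]]]]]]]]].
  assert (HPIL : forall r, P r <-> Af I r \/ Af L r) by (intros; unfold P; tauto).
  assert (HPLI : forall r, P r <-> Af L r \/ Af I r) by (intros; unfold P; tauto).
  assert (Hdown : forall p q, inO sz q -> (p <= q)%nat -> inO sz p)
    by (intros p q; unfold inO; destruct sz; auto; lia).
  set (GB := fun p K => (exists i, GoodB I i sz e p /\ K = fint I i) \/
                        (exists j, GoodB L j sz e p /\ K = fint L j)).
  assert (HGB : forall p, inO sz p -> exists K, GB p K).
  { intros p Hp. destruct (E1 p Hp) as [[i [Hi Hmi]]|[j [Hj Hmj]]].
    - destruct (lam x HJ P sz e E1 E2 E3 I L HpI HpL HPIL i p Hi Hmi Hp) as [[i' H]|[j H]].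
      + exists (fint I i'); left; eauto. + exists (fint L j); right; eauto.
    - destruct (lam x HJ P sz e E1 E2 E3 L I HpL HpI HPLI j p Hj Hmj Hp) as [[j' H]|[i H]].
      + exists (fint L j'); right; eauto. + exists (fint I i); left; eauto. }
  set (Nf := fun p => epsilon (inhabits (IInf 0)) (GB p)).
  assert (HN : forall p, inO sz p -> GB p (Nf p)) by (intros; apply epsilon_spec; auto).
  assert (HNP : forall p, inO sz p -> exists h i, x_norming_partition x h /\
                  GoodB h i sz e p /\ Nf p = fint h i).
  { intros p Hp. destruct (HN p Hp) as [[i [H1 H2]]|[j [H1 H2]]]; eauto. }
  set (N := mkIFamily sz Nf).
  assert (HfamN : is_family N).
  { intros p Hp. change (inO sz (S p)) in Hp.
    destruct (HNP p (Hdown p (S p) Hp ltac:(lia))) as [h [i [Hh [[Hi [Hm Hnext]] Eq]]]].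
    destruct Hnext as [[HS [_ Hm']]|[_ Hn]]; [|contradiction].
    destruct (proj1 (proj1 Hh) i HS) as [b [Hb Hlt]]. exists b. simpl. rewrite Eq. split; auto.
    destruct (HNP (S p) Hp) as [h' [i' [_ [[_ [Hm2 _]] Eq']]]]. rewrite Eq', Hm2. lia. }
  assert (NSC : forall p n, inO sz p -> supp x n ->
     (in_int (Nf p) n <-> (e p <= n)%nat /\ (inO sz (S p) -> (n < e (S p))%nat))).
  { intros p n Hp Hsn. destruct (HNP p Hp) as [h [i [Hh [[Hi [Hm Hnext]] Eq]]]].
    rewrite Eq, (sc x HJ h i n Hh Hi Hsn), Hm.
    destruct Hnext as [[HS [HSp Hm']]|[HS HSp]].
    - rewrite Hm'. tauto.
    - tauto. }
  destruct (fcount I HfI) as [cA [cA0 [cAP [cAN cAR]]]].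
  destruct (fcount L HfL) as [cC [cC0 [cCP [cCN cCR]]]].
  set (bI := fun r => fint I (cA r)). set (bL := fun r => fint L (cC r)).
  assert (Hch : forall r, P r -> (Af I r /\ Nf (cnt r) = bI r) \/ (Af L r /\ Nf (cnt r) = bL r)).
  { intros r Hr. destruct (CP r Hr) as [Hc He].
    assert (Hq : inO sz (cnt r)) by (apply (CR (S r)); lia).
    destruct (HN _ Hq) as [[i [[Hi [Hm _]] Eq]]|[j [[Hj [Hm _]] Eq]]]; rewrite He in Hm.
    - left. assert (HA : Af I r) by (exists i; auto). split; auto.
      destruct (cAP r HA) as [H1 [H2 _]]. unfold bI. rewrite Eq. f_equal.
      apply (fam_min_inj I); auto. congruence.
    - right. assert (HA : Af L r) by (exists j; auto). split; auto.
      destruct (cCP r HA) as [H1 [H2 _]]. unfold bL. rewrite Eq. f_equal.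
      apply (fam_min_inj L); auto. congruence. }
  set (other := fun r => if excluded_middle_informative (Nf (cnt r) = bI r) then bL r else bI r).
  set (q := fun r => if excluded_middle_informative (Af I r /\ Af L r) then Some (other r) else None).
  assert (Hid : forall r, psumsq x Nf (cnt r) + sumsq_list x (buildl q r) =
                          psumsq x (fint I) (cA r) + psumsq x (fint L) (cC r)).
  { induction r.
    - rewrite C0, cA0, cC0. simpl. lra.
    - simpl buildl. rewrite sumsq_app.
      destruct (classic (Af I r)) as [HAI|HAI]; destruct (classic (Af L r)) as [HAL|HAL].
      + assert (HPr : P r) by (left; auto).
        unfold q at 2. destruct (excluded_middle_informative (Af I r /\ Af L r)) as [_|Hn];
          [|tauto].
        rewrite (proj1 (CP r HPr)), (proj2 (proj2 (cAP r HAI))), (proj2 (proj2 (cCP r HAL))).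
        rewrite !psum_S. cbn [sumsq_list fold_right].
        assert (isum x (Nf (cnt r)) ^ 2 + isum x (other r) ^ 2 =
                isum x (bI r) ^ 2 + isum x (bL r) ^ 2).
        { unfold other. destruct (excluded_middle_informative (Nf (cnt r) = bI r)) as [E|E].
          - rewrite E. reflexivity.
          - destruct (Hch r HPr) as [[_ E']|[_ E']]. contradiction. rewrite E'. lra. }
        unfold bI, bL in H. lra.
      + assert (HPr : P r) by (left; auto).
        unfold q at 2. destruct (excluded_middle_informative (Af I r /\ Af L r)) as [Hb|_];
          [tauto|].
        rewrite (proj1 (CP r HPr)), (proj2 (proj2 (cAP r HAI))), (cCN r HAL).
        rewrite !psum_S. cbn [sumsq_list fold_right].
        destruct (Hch r HPr) as [[_ E']|[Hc _]]; [|contradiction]. rewrite E'. unfold bI. lra.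
      + assert (HPr : P r) by (right; auto).
        unfold q at 2. destruct (excluded_middle_informative (Af I r /\ Af L r)) as [Hb|_];
          [tauto|].
        rewrite (proj1 (CP r HPr)), (proj2 (proj2 (cCP r HAL))), (cAN r HAI).
        rewrite !psum_S. cbn [sumsq_list fold_right].
        destruct (Hch r HPr) as [[Hc _]|[_ E']]; [contradiction|]. rewrite E'. unfold bL. lra.
      + assert (HPr : ~ P r) by (unfold P; tauto).
        unfold q at 2. destruct (excluded_middle_informative (Af I r /\ Af L r)) as [Hb|_];
          [tauto|].
        rewrite (CN r HPr), (cAN r HAI), (cCN r HAL). cbn [sumsq_list fold_right]. lra. }
  assert (Hinv : forall r, srt (buildl q r) /\ forall K, In K (buildl q r) ->
            exists s, (s < r)%nat /\ Af I s /\ Af L s /\ (K = bI s \/ K = bL s)).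
  { induction r.
    - split. constructor. intros K [].
    - destruct IHr as [Hs Hin]. simpl buildl.
      destruct (classic (Af I r /\ Af L r)) as [[HAI HAL]|Hn].
      + assert (Hqr : q r = Some (other r)).
        { unfold q. destruct (excluded_middle_informative (Af I r /\ Af L r)); tauto. }
        rewrite Hqr. assert (Ho : other r = bI r \/ other r = bL r).
        { unfold other. destruct (excluded_middle_informative (Nf (cnt r) = bI r)); auto. }
        split.
        * apply srt_app; auto. constructor; constructor.
          intros a b Ha [<-|[]] m n Hm Hn.
          assert (Hrn : (r <= n)%nat).
          { destruct Ho as [Ho|Ho]; rewrite Ho in Hn; apply in_int_ge in Hn.
            - unfold bI in Hn. rewrite (proj1 (proj2 (cAP r HAI))) in Hn. auto.
            - unfold bL in Hn. rewrite (proj1 (proj2 (cCP r HAL))) in Hn. auto. }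
          destruct (Hin a Ha) as [s [Hsr [HsI [HsL [Ea|Ea]]]]]; subst a.
          -- pose proof (before_start I cA HfI ltac:(intros r0 H0; split; apply cAP; auto)
                 s r m HsI HAI Hsr Hm). lia.
          -- pose proof (before_start L cC HfL ltac:(intros r0 H0; split; apply cCP; auto)
                 s r m HsL HAL Hsr Hm). lia.
        * intros K HK. apply in_app_or in HK. destruct HK as [HK|HK]; [|destruct HK as [<-|[]]].
          -- destruct (Hin K HK) as [s [? ?]]. exists s; split; auto.
          -- exists r. split; auto.
      + assert (Hqr : q r = None).
        { unfold q. destruct (excluded_middle_informative (Af I r /\ Af L r)); tauto. }
        rewrite Hqr. rewrite app_nil_r. split; auto. intros K HK. destruct (Hin K HK) as [s [? ?]].
        exists s; split; auto. }
  assert (HgoodN : forall eps, 0 < eps -> exists n, Reach N n /\ nJ x ^ 2 - eps <= psumsq x Nf n).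
  { intros eps He.
    destruct (good_fam x I HJ (proj1 HpI) (eps / 2) ltac:(lra) 0%nat ltac:(intros m Hm; lia))
      as [nI [_ [HRI HvI]]].
    destruct (good_fam x L HJ (proj1 HpL) (eps / 2) ltac:(lra) 0%nat ltac:(intros m Hm; lia))
      as [nL [_ [HRL HvL]]].
    set (r := S (min_int (fint I (pred nI)) + min_int (fint L (pred nL)))).
    assert (H1 : (nI <= cA r)%nat).
    { destruct nI as [|k]. lia. apply cAR. apply HRI; lia. unfold r. simpl pred. lia. }
    assert (H2 : (nL <= cC r)%nat).
    { destruct nL as [|k]. lia. apply cCR. apply HRL; lia. unfold r. simpl pred. lia. }
    pose proof (psum_mono x (fint I) _ _ H1). pose proof (psum_mono x (fint L) _ _ H2).
    pose proof (list_bound x (buildl q r) HJ (proj1 (Hinv r))).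
    pose proof (Hid r).
    exists (cnt r). split. intros m Hm. apply (CR r); auto. lra. }
  assert (HNbound : forall n, Reach N n -> psumsq x Nf n <= nJ x ^ 2).
  { intros n Hn. apply (fam_bound x N n HJ HfamN Hn). }
  assert (HnJ : 0 <= nJ x) by (apply nJ_nonneg; auto).
  assert (Hnorm : norm_fam x N = normJ x).
  { unfold norm_fam. rewrite (normJ_fin x HJ). change (fsize N) with sz.
    change (fint N) with Nf.
    assert (HR : forall n, Reach N n -> match sz with Some k => (n <= k)%nat | None => True end).
    { intros n Hn. unfold Reach, inF in Hn. simpl in Hn. destruct sz; auto.
      destruct (Nat.le_gt_cases n n0); auto. specialize (Hn n0 H). lia. }
    destruct sz as [k|] eqn:Esz.
    - f_equal. assert (HRk : Reach N k) by (intros m Hm; simpl; unfold inF; simpl; auto).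
      assert (psumsq x Nf k = nJ x ^ 2).
      { apply Rle_antisym. apply HNbound; auto.
        apply le_epsilon. intros eps He. destruct (HgoodN eps He) as [n [Hn Hv]].
        specialize (HR n Hn). pose proof (psum_mono x Nf n k HR). lra. }
      rewrite H. apply sqrt_pow2; auto.
    - apply is_lim_seq_unique. apply is_lim_seq_spec. intros eps.
      destruct (HgoodN ((eps / 2) ^ 2)) as [n0 [Hn0 Hv]].
      { pose proof (cond_pos eps). nra. }
      exists n0. intros n Hn. apply sqrt_close; auto. apply cond_pos. apply psum_nonneg.
      apply HNbound. intros m _; simpl; unfold inF; simpl; auto.
      pose proof (psum_mono x Nf n0 n Hn). lra. }
  exists N. split; [|split; [|split]].
  - split. split; auto. split.
    + intros p Hp HSp. change (inO sz p) in Hp. change (inO sz (S p)) in HSp.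
      destruct (HNP p Hp) as [h [i [Hh [[Hi [Hm Hnext]] Eq]]]].
      destruct Hnext as [[HS _]|[_ Hn]]; [|contradiction].
      simpl. rewrite Eq. destruct Hh as [_ [H2 _]]. apply H2; auto.
    + intros p Hsz. simpl in Hsz.
      assert (Hp : inO sz p) by (rewrite Hsz; simpl; lia).
      assert (HSp : ~ inO sz (S p)) by (rewrite Hsz; simpl; lia).
      destruct (HNP p Hp) as [h [i [Hh [[Hi [Hm Hnext]] Eq]]]].
      destruct Hnext as [[_ [Hn _]]|[HS _]]; [contradiction|].
      simpl. rewrite Eq. destruct Hh as [_ [_ H3]]. apply H3. apply last_size; auto.
  - intros p Hp. change (inO sz p) in Hp. destruct (HN p Hp) as [[i [[Hi _] Eq]]|[j [[Hj _] Eq]]].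
    + left. exists i. split; auto. simpl. rewrite Eq. intros n; tauto.
    + right. exists j. split; auto. simpl. rewrite Eq. intros n; tauto.
  - intros i Hi. apply (covers_gen x sz e Nf I i HJ HpI E2); auto.
    intros r Hr. apply E3. left; auto.
  - intros j Hj. apply (covers_gen x sz e Nf L j HJ HpL E2); auto.
    intros r Hr. apply E3. right; auto.
Qed.
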